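(* Let $X$ be a linearly ordered set. For every odd $n\ge3$ there exists $b\ge n$ such that for every $b$-ary majority function $\mathrm{maj}_b:X^b\to X$ we have $\mathrm{med}_n\in\langle\{\mathrm{med}_3,\mathrm{maj}_b\}\rangle$.
   Context: A function $f:X^b\to X$ is a majority function iff $f(x_1,\dots,x_b)=x$ whenever the value $x$ occurs at least $\lceil\frac{b+1}{2}\rceil$ times among $x_1,\dots,x_b$. For odd $n$, $\mathrm{med}_n(x_1,\dots,x_n)$ is the $\frac{n+1}{2}$-th smallest entry of $(x_1,\dots,x_n)$ (counted with multiplicity) in the linear order. A clone on $X$ is a set of finitary operations containing all projections and closed under composition; $\langle\mathscr F\rangle$ is the smallest clone containing $\mathscr F$. *)

(* Defs.v *)
From mathcomp Require Import all_boot all_order.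
Set Implicit Arguments. Unset Strict Implicit. Unset Printing Implicit Defensive.
Import Order.TTheory.
Local Open Scope order_scope.

Section Clones.
Variables (d : Order.disp_t) (X : orderType d).

Definition op (k : nat) := ('I_k -> X) -> X.

Definition opset := forall k : nat, op k -> Prop.

Definition is_clone (C : opset) : Prop :=
  (forall (k : nat) (i : 'I_k), C k (fun x => x i)) /\
  (forall (m k : nat) (f : op m) (gs : 'I_m -> op k),
      C m f -> (forall j, C k (gs j)) -> C k (fun x => f (fun j => gs j x))).

Definition gen_clone (F : opset) : opset :=
  fun k f => forall C : opset, is_clone C -> (forall m g, F m g -> C m g) -> C k f.

Definition opset2 (m1 : nat) (f1 : op m1) (m2 : nat) (f2 : op m2) : opset :=
  fun m g => existT op m g = existT op m1 f1 \/ existT op m g = existT op m2 f2.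

Definition majority (b : nat) (f : op b) : Prop :=
  forall (x : 'I_b -> X) (a : X),
    ((b.+2)./2 <= #|[pred i | x i == a]|)%N -> f x = a.

(* medS k = med_(k+1): the ((k+2)/2)-th smallest entry (0-based index k/2,
   which for odd n = k+1 is index (n-1)/2), counted with multiplicity *)
Definition medS (k : nat) : op k.+1 :=
  fun x => nth (x ord0) (sort <=%O [seq x i | i <- enum 'I_k.+1]) k./2.

End Clones.

(* Main.v *)
From mathcomp Require Import all_boot all_order all_algebra.
Require Import Defs.
From mathcomp Require Import zify.
From Stdlib Require Import FunctionalExtensionality.
Set Implicit Arguments. Unset Strict Implicit.
Import Order.TTheory GRing.Theory Num.Theory.

From mathcomp Require Import ring lra.
Local Open Scope order_scope.
Lemma nth_sorted_P (d : Order.disp_t) (X : orderType d) (P : pred X)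
  (HP : forall a b, P a -> b <= a -> P b) (s : seq X) (x0 : X) (i : nat) :
  sorted <=%O s -> (i < size s)%N -> P (nth x0 s i) = (i < count P s)%N.
Proof.
elim: s i => [//|a s IH] i /= Hs Hi.
have Hall : all (fun z => a <= z) s.
  by apply: order_path_min => //; exact: le_trans.
have nP : ~~ P a -> count P s = 0%N.
  move=> nPa; apply/eqP; rewrite -leqn0 leqNgt -has_count; apply/hasP => -[z zs Pz].
  by move/allP: Hall => /(_ z zs) az; rewrite (HP _ _ Pz az) in nPa.
case: i Hi => [|i] Hi /=.
  case Pa: (P a) => //; by rewrite nP ?Pa.
rewrite IH //; last by apply: path_sorted Hs.
case Pa: (P a) => //=; rewrite nP ?Pa //.
Qed.
Lemma count_sum (X : Type) n (P : pred X) (x : 'I_n -> X) :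
  count P [seq x i | i <- enum 'I_n] = (\sum_(i < n) P (x i))%N.
Proof.
rewrite count_map -sum1_count big_enum_cond big_mkcond /=.
by apply: eq_bigr => i _; case: (P (x i)).
Qed.
Lemma medS_P (d : Order.disp_t) (X : orderType d) (P : pred X)
  (HP : forall a b, P a -> b <= a -> P b) k (x : 'I_k.+1 -> X) :
  P (medS x) = (k./2 < \sum_(i < k.+1) P (x i))%N.
Proof.
rewrite /medS nth_sorted_P //; first by rewrite count_sort count_sum.
rewrite size_sort size_map size_enum_ord ltnS -divn2; exact: leq_div.
Qed.
Local Close Scope order_scope.
Local Open Scope ring_scope.
Fixpoint idx (N : nat) (j : nat) : finType :=
  if j is j'.+1 then ((idx N j' * idx N j') * idx N j')%type else 'I_N.
Lemma card_idx N j : (0 < N)%N -> (N <= #|idx N j|)%N.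
Proof.
move=> N0; elim: j => [|j IH] /=; first by rewrite card_ord.
rewrite !card_prod.
have : (1 <= #|idx N j|)%N by apply: leq_trans N0 IH.
move: IH; set a := #|idx N j|; nia.
Qed.
Lemma cardS N j : #|idx N j.+1| = (#|idx N j| * #|idx N j| * #|idx N j|)%N.
Proof. by rewrite /= !card_prod. Qed.
Lemma ev_enum (T : finType) (F : T -> rat) : (\sum_(w : T) F w = \sum_(i < #|T|) F (enum_val i))%R.
Proof. by rewrite -big_enum_val. Qed.
Lemma half_ok (b c : nat) : (b < c * 2)%N -> ((b.+2)./2 <= c)%N.
Proof. move=> H; rewrite -divn2; lia. Qed.
Definition sel (A : Type) (t : (A * A) * A) (i : 'I_3) : A :=
  if val i == 0%N then t.1.1 else if val i == 1%N then t.1.2 else t.2.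

Fixpoint ev (d : Order.disp_t) (X : orderType d) (N : nat) (j : nat) : idx N j -> ('I_N -> X) -> X :=
  match j return idx N j -> ('I_N -> X) -> X with
  | 0 => fun w x => x w
  | j'.+1 => fun t x => @medS _ X 2 (fun i => @ev d X N j' (@sel (idx N j') t i) x)
  end.
Arguments ev {d X N j}.

Lemma ev_clone (d : Order.disp_t) (X : orderType d) (N : nat) (C : opset X) :
  is_clone C -> C 3 (@medS _ X 2) -> forall j (w : idx N j), C N (ev w).
Proof.
move=> [Hp Hc] Hm; elim=> [|j IH] w /=.
  exact: (Hp N w).
exact: (Hc 3 N _ (fun i => ev (@sel (idx N j) w i)) Hm (fun i => IH _)).
Qed.
Lemma sum3 (A : finType) (f g h : A -> rat) :
  \sum_(t : (A * A) * A) f t.1.1 * g t.1.2 * h t.2 =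
  (\sum_a f a) * (\sum_a g a) * (\sum_a h a).
Proof.
rewrite -(pair_bigA _ (fun p c => f p.1 * g p.2 * h c)) /=.
rewrite -(pair_bigA _ (fun a b => \sum_c f a * g b * h c)) /=.
rewrite mulr_suml mulr_suml; apply: eq_bigr => a _.
rewrite -mulrA mulr_suml mulr_sumr; apply: eq_bigr => b _.
by rewrite !mulr_sumr; apply: eq_bigr => c _; rewrite !mulrA.
Qed.

Lemma ind3 (a b c : bool) :
  ((1 < a + b + c)%N)%:R = a%:R * b%:R * 1 + a%:R * 1 * c%:R + 1 * b%:R * c%:R
     - 2 * (a%:R * b%:R * c%:R) :> rat.
Proof. by case: a; case: b; case: c. Qed.

Lemma sumMaj (A : finType) (f : A -> bool) :
  \sum_(t : (A * A) * A) ((1 < f t.1.1 + f t.1.2 + f t.2)%N)%:R =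
  3 * (\sum_a (f a)%:R)^+2 * #|A|%:R - 2 * (\sum_a (f a)%:R : rat)^+3.
Proof.
under eq_bigr => t _ do rewrite ind3.
set F := fun a : A => ((f a)%:R : rat).
set O := fun _ : A => (1 : rat).
rewrite sumrB !big_split /= -mulr_sumr.
rewrite (sum3 F F O) (sum3 F O F) (sum3 O F F) (sum3 F F F).
have -> : \sum_(a : A) (1 : rat) = #|A|%:R by rewrite sumr_const.
ring.
Qed.
Definition hh (p : rat) := 3 * p ^+ 2 - 2 * p ^+ 3.

Lemma hstep (p e : rat) : 0 <= e -> e <= 1/4 -> 1/2 + e <= p -> p <= 1 ->
  1/2 + 5/4 * e <= hh p.
Proof.
move=> e0 e1 ep p1; rewrite /hh.
set dd := p - 1/2.
have -> : p = 1/2 + dd by rewrite /dd; ring.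
have hd : e <= dd by rewrite /dd; lra.
have hd1 : dd <= 1/2 by rewrite /dd; lra.
have A : (dd - e) * (3/2 - 2 * (dd^+2 + dd * e + e^+2)) >= 0.
  apply: mulr_ge0; first lra.
  nra.
have B : e * (3/2 - 2 * e ^+2) >= 5/4 * e by nra.
nra.
Qed.

Lemma bern (n : nat) : 1 + n%:R / 4 <= (5/4 : rat) ^+ n.
Proof.
elim: n => [|n IH]; first by rewrite expr0 mul0r addr0.
rewrite exprS -natr1.
have h0 : 0 <= (n%:R : rat) by apply: ler0n.
nra.
Qed.

Lemma iter_bound (u : nat -> rat) (N : nat) : (0 < N)%N ->
  (forall j, u j.+1 = hh (u j)) -> (forall j, u j <= 1) ->
  1/2 + 1 / (2 * N%:R) <= u 0%N -> 13/16 <= u (2 * N).+1%N.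
Proof.
move=> N0 Hrec H1 H0.
have Np : 0 < (N%:R : rat) by rewrite ltr0n.
have claim : forall j, (3/4 <= u j) \/ ((5/4)^+j / (2 * N%:R) <= u j - 1/2).
  elim=> [|j IH].
    right; rewrite expr0; lra.
  rewrite Hrec.
  case: IH => IH.
    left; have := hstep (p:=u j) (e:=1/4) _ _ _ (H1 j); lra.
  have e0 : 0 <= (5/4)^+j / (2 * N%:R) :> rat.
    apply: divr_ge0; [apply: exprn_ge0; lra | lra].
  case: (lerP (3/4) (u j)) => Hu.
    left; have := hstep (p:=u j) (e:=1/4) _ _ _ (H1 j); lra.
  right.
  have := hstep (p:=u j) e0 ltac:(lra) ltac:(lra) (H1 j).
  rewrite exprS. 
  have -> : 5 / 4 * (5 / 4) ^+ j / (2 * N%:R) = 5/4 * ((5 / 4) ^+ j / (2 * N%:R)) :> rat by rewrite mulrA.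
  lra.
have K : 3/4 <= u (2 * N)%N.
  case: (claim (2 * N)%N) => // Hc.
  have Hb := bern (2 * N).
  rewrite natrM in Hb.
  have : 1/4 <= (5/4)^+(2*N) / (2 * N%:R) :> rat.
    rewrite ler_pdivlMr; last lra.
    have : (2%:R : rat) = 2 by [].
    nra.
  lra.
rewrite Hrec; have := hstep (p:=u (2*N)%N) (e:=1/4) ltac:(lra) ltac:(lra) ltac:(lra) (H1 _); lra.
Qed.

Definition sP (d : Order.disp_t) (X : orderType d) N j (P : pred X) (x : 'I_N -> X) : rat :=
  \sum_(w : idx N j) (P (ev w x))%:R.
Arguments sP {d X N} j P x.

Lemma srec (d : Order.disp_t) (X : orderType d) N j (P : pred X)
  (HP : forall a b, P a -> (b <= a)%O -> P b) (x : 'I_N -> X) :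
  sP j.+1 P x = 3 * sP j P x ^+ 2 * #|idx N j|%:R - 2 * sP j P x ^+ 3.
Proof.
rewrite /sP /=.
under eq_bigr => t _ do rewrite (medS_P HP) !big_ord_recr big_ord0 /=.
exact: (sumMaj (fun w => P (ev w x))).
Qed.

Lemma hsym (q : rat) : hh (1 - q) = 1 - hh q.
Proof. rewrite /hh; ring. Qed.

Lemma sP_bounds (d : Order.disp_t) (X : orderType d) N j (P : pred X) (x : 'I_N -> X) :
  0 <= sP j P x <= #|idx N j|%:R.
Proof.
apply/andP; split; first by apply: sumr_ge0 => w _; apply: ler0n.
rewrite -sumr_const; apply: ler_sum => w _; by case: (P _).
Qed.

Lemma card_sum (T : finType) (Q : pred T) : (#|Q|%:R : rat) = \sum_(i : T) (Q i)%:R.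
Proof.
rewrite -sum1_card natr_sum big_mkcond /=; apply: eq_bigr => i _.
by rewrite unfold_in; case: (Q i).
Qed.

Lemma urec (d : Order.disp_t) (X : orderType d) N j (P : pred X)
  (HP : forall a b, P a -> (b <= a)%O -> P b) (x : 'I_N -> X) : (0 < N)%N ->
  sP j.+1 P x / #|idx N j.+1|%:R = hh (sP j P x / #|idx N j|%:R).
Proof.
move=> N0; rewrite srec // cardS !natrM /hh.
have : (#|idx N j|%:R : rat) != 0.
  by rewrite pnatr_eq0 -lt0n; apply: leq_trans N0 (card_idx _ N0).
move=> H; field; exact: H.
Qed.

Lemma P1_dc (d : Order.disp_t) (X : orderType d) (v : X) :
  forall a b, (fun z => (z <= v)%O) a -> (b <= a)%O -> (fun z => (z <= v)%O) b.
Proof. move=> a b /= H1 H2; exact: le_trans H2 H1. Qed.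
Lemma P2_dc (d : Order.disp_t) (X : orderType d) (v : X) :
  forall a b, (fun z => (z < v)%O) a -> (b <= a)%O -> (fun z => (z < v)%O) b.
Proof. move=> a b /= H1 H2; exact: le_lt_trans H2 H1. Qed.

Lemma ubound (d : Order.disp_t) (X : orderType d) N j (P : pred X) (x : 'I_N -> X) :
  (0 < N)%N -> sP j P x / #|idx N j|%:R <= 1.
Proof.
move=> N0; have /andP[_ H] := sP_bounds j P x.
have Mp : (0 : rat) < #|idx N j|%:R by rewrite ltr0n; apply: leq_trans N0 (card_idx _ N0).
by rewrite ler_pdivrMr // mul1r.
Qed.
Lemma lbound (d : Order.disp_t) (X : orderType d) N j (P : pred X) (x : 'I_N -> X) :
  (0 < N)%N -> 1 - sP j P x / #|idx N j|%:R <= 1.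
Proof.
move=> N0; have /andP[H _] := sP_bounds j P x.
have Mp : (0 : rat) < #|idx N j|%:R by rewrite ltr0n; apply: leq_trans N0 (card_idx _ N0).
have : 0 <= sP j P x / #|idx N j|%:R by apply: divr_ge0 => //; apply: ltW.
lra.
Qed.

Lemma sP0 (d : Order.disp_t) (X : orderType d) N (P : pred X) (x : 'I_N -> X) :
  sP 0 P x = (\sum_(i < N) P (x i))%N%:R.
Proof. by rewrite /sP natr_sum. Qed.

Lemma frac_lb (n c : nat) : (n.+2 <= 2 * c)%N -> 1/2 + 1/(2 * n.+1%:R) <= c%:R / n.+1%:R :> rat.
Proof.
move=> H.
have H' : (n.+2%:R : rat) <= 2 * c%:R by rewrite -natrM ler_nat.
have np : (0 : rat) < n.+1%:R by rewrite ltr0n.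
rewrite -!natr1 in H' np *.
rewrite ler_pdivlMr //. 
have -> : (1 / 2 + 1 / (2 * (n%:R + 1))) * (n%:R + 1) = (n%:R + 2) / 2 :> rat.
  by field; lra.
lra.
Qed.
Lemma frac_ub (n c : nat) : (2 * c <= n)%N -> 1/2 + 1/(2 * n.+1%:R) <= 1 - c%:R / n.+1%:R :> rat.
Proof.
move=> H.
have H' : 2 * (c%:R : rat) <= n%:R by rewrite -natrM ler_nat.
have np : (0 : rat) < n.+1%:R by rewrite ltr0n.
rewrite -!natr1 in np *.
have -> : 1 - c%:R / (n%:R + 1) = (n%:R + 1 - c%:R) / (n%:R + 1) :> rat by field; lra.
rewrite ler_pdivlMr //. 
have -> : (1 / 2 + 1 / (2 * (n%:R + 1))) * (n%:R + 1) = (n%:R + 2) / 2 :> rat.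
  by field; lra.
lra.
Qed.

Lemma count_main (d : Order.disp_t) (X : orderType d) (k : nat) (K : nat) :
  odd k.+1 -> K = (2 * k.+1).+1 -> forall x : 'I_k.+1 -> X,
  (#|idx k.+1 K| < #|[pred i : 'I_#|idx k.+1 K| | ev (enum_val i) x == medS x]| * 2)%N.
Proof.
move=> Hodd -> x.
have N0 : (0 < k.+1)%N by [].
  rewrite -(ltr_nat rat) natrM [in X in _ < X]card_sum.
  set v := medS x.
  rewrite (_ : \sum_(i < _) _ = \sum_(w : idx k.+1 (2 * k.+1).+1) ((ev w x == v) : nat)%:R); last first.
    by rewrite [RHS]ev_enum; apply: eq_bigr => i _.
  have E : \sum_(w : idx k.+1 (2 * k.+1).+1) ((ev w x == v) : nat)%:R =
     sP (2 * k.+1).+1 (fun z => (z <= v)%O) x - sP (2 * k.+1).+1 (fun z => (z < v)%O) x.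
    rewrite /sP -sumrB; apply: eq_bigr => w _.
    by case: (ltgtP (ev w x) v).
  rewrite E.
  set M := #|idx k.+1 (2 * k.+1).+1|%:R.
  have hk : (k./2).*2 = k by rewrite halfK; move: Hodd => /= /negbTE ->; rewrite subn0.
  have c1 : (k./2 < \sum_(i < k.+1) (fun z => (z <= v)%O) (x i))%N.
    by rewrite -(medS_P (@P1_dc _ _ v)) /= le_refl.
  have c2 : ~~ (k./2 < \sum_(i < k.+1) (fun z => (z < v)%O) (x i))%N.
    by rewrite -(medS_P (@P2_dc _ _ v)) /= ltxx.
  have B1 := @iter_bound (fun j => sP j (fun z => (z <= v)%O) x / #|idx k.+1 j|%:R) k.+1 N0
    (fun j => urec j (@P1_dc _ _ v) x N0) (fun j => ubound j _ x N0).
  have B2 := @iter_bound (fun j => 1 - sP j (fun z => (z < v)%O) x / #|idx k.+1 j|%:R) k.+1 N0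
    (fun j => ltac:(by rewrite /= hsym (urec j (@P2_dc _ _ v) x N0))) (fun j => lbound j _ x N0).
  rewrite /= !sP0 card_ord in B1 B2.
  have hk' : (k = 2 * k./2)%N by rewrite -{1}hk -muln2 mulnC.
  move: c1 c2; rewrite -leqNgt.
  set c1 := (\sum_(i < k.+1) _)%N; set c2 := (\sum_(i < k.+1) _)%N => H1 H2.
  have {B1} B1 := B1 (@frac_lb k c1 ltac:(lia)).
  have {B2} B2 := B2 (@frac_ub k c2 ltac:(lia)).
  have Mp : (0 : rat) < M by rewrite ltr0n; apply: leq_trans N0 (card_idx _ N0).
  rewrite -/M in B1 B2.
  move: B1 B2; rewrite ler_pdivlMr // => B1.
  have -> : 1 - sP (2 * k.+1).+1 (fun z => (z < v)%O) x / M =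
     (M - sP (2 * k.+1).+1 (fun z => (z < v)%O) x) / M by field; lra.
  rewrite ler_pdivlMr // => B2.
  lra.
Qed.

Theorem mainTheorem9 (d : Order.disp_t) (X : orderType d) (k : nat) :
  odd k.+1 -> (3 <= k.+1)%N ->
  exists b : nat, (k.+1 <= b)%N /\
    forall majb : op X b, majority majb ->
      @gen_clone _ X (opset2 (@medS _ X 2) majb) k.+1 (@medS _ X k).
Proof.
move=> Hodd H3.
have N0 : (0 < k.+1)%N by [].
exists #|idx k.+1 (2 * k.+1).+1|; split; first exact: card_idx.
move=> majb Hmaj C HC HF.
have HB : C _ majb := HF _ majb (or_intror erefl).
have Hm : C 3 (@medS _ X 2) := HF _ _ (or_introl erefl).
have -> : @medS _ X k = fun x => majb (fun i => ev (enum_val i) x).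
  apply: functional_extensionality => x.
  symmetry; apply: Hmaj; apply: half_ok; exact: count_main.
exact: (HC.2 _ _ majb _ HB (fun i => ev_clone HC Hm _)).
Qed.
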